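(* If $\Gamma$ is a flat Type $\mathcal A$ connection, then $\Gamma$ is linearly equivalent to $\Gamma_i^0$ for some $0\le i\le5$, where $\Gamma_0^0=\Gamma(0,0,0,0,0,0)$, $\Gamma_1^0=\Gamma(1,0,0,1,0,0)$, $\Gamma_2^0=\Gamma(-1,0,0,0,0,1)$, $\Gamma_3^0=\Gamma(0,0,0,0,0,1)$, $\Gamma_4^0=\Gamma(0,0,0,0,1,0)$, $\Gamma_5^0=\Gamma(1,0,0,1,-1,0)$. Furthermore, $\Gamma_i^0$ is not linearly equivalent to $\Gamma_j^0$ for $i\ne j$.
   Context: A torsion-free connection on $\mathbb R^2$ has Christoffel symbols $\nabla_{\partial_{x^i}}\partial_{x^j}=\Gamma_{ij}^k\partial_{x^k}$. For real constants, $\Gamma(a,b,c,d,e,f)$ denotes the connection on $\mathbb R^2$ whose Christoffel symbols in the standard coordinates $(x^1,x^2)$ are the constants $\Gamma_{11}^1=a$, $\Gamma_{11}^2=b$, $\Gamma_{12}^1=\Gamma_{21}^1=c$, $\Gamma_{12}^2=\Gamma_{21}^2=d$, $\Gamma_{22}^1=e$, $\Gamma_{22}^2=f$; a Type $\mathcal A$ connection is one of this form. Flat means the curvature tensor vanishes. Two Type $\mathcal A$ connections are linearly equivalent if there is $T\in GL(2,\mathbb R)$ with $T^*\nabla_2=\nabla_1$ (they differ by a linear change of coordinates). *)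

(* Defs.v *)
From Stdlib Require Import Reals.
Open Scope R_scope.

Inductive idx := i1 | i2.

Definition sum2 (f : idx -> R) : R := f i1 + f i2.

Record TypeA := mkTypeA { ca : R; cb : R; cc : R; cd : R; ce : R; cf : R }.

(* Christoffel symbol Gamma_{ij}^k (torsion free: symmetric in i j). *)
Definition Gam (G : TypeA) (i j k : idx) : R :=
  match i, j, k with
  | i1, i1, i1 => ca G
  | i1, i1, i2 => cb G
  | i1, i2, i1 | i2, i1, i1 => cc G
  | i1, i2, i2 | i2, i1, i2 => cd G
  | i2, i2, i1 => ce G
  | i2, i2, i2 => cf G
  end.

(* Curvature component: R(d_i,d_j) d_k = curv i j k m d_m; since the
   Christoffel symbols are constant, derivative terms vanish:
   nabla_i nabla_j d_k - nabla_j nabla_i d_k. *)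
Definition curv (G : TypeA) (i j k m : idx) : R :=
  sum2 (fun l => Gam G j k l * Gam G i l m - Gam G i k l * Gam G j l m).

Definition flat (G : TypeA) : Prop := forall i j k m, curv G i j k m = 0.

(* A 2x2 real matrix T, T a i = entry in row a, column i (T e_i = sum_a T a i e_a). *)
Definition det2 (T : idx -> idx -> R) : R :=
  T i1 i1 * T i2 i2 - T i1 i2 * T i2 i1.

(* T^* nabla2 = nabla1 for the linear map T: for constant vector fields,
   (T^* nabla2)_u v = T^{-1} (nabla2_{Tu} Tv), i.e.
   T (Gamma1(e_i,e_j)) = Gamma2(T e_i, T e_j). *)
Definition lin_equiv (G1 G2 : TypeA) : Prop :=
  exists T : idx -> idx -> R, det2 T <> 0 /\
    forall i j l,
      sum2 (fun k => T l k * Gam G1 i j k) =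
      sum2 (fun a => sum2 (fun b => T a i * T b j * Gam G2 a b l)).

(* The normal forms Gamma_i^0, 0 <= i <= 5 (default for i > 5 irrelevant). *)
Definition Gamma0 (i : nat) : TypeA :=
  match i with
  | 0%nat => mkTypeA 0 0 0 0 0 0
  | 1%nat => mkTypeA 1 0 0 1 0 0
  | 2%nat => mkTypeA (-1) 0 0 0 0 1
  | 3%nat => mkTypeA 0 0 0 0 0 1
  | 4%nat => mkTypeA 0 0 0 0 1 0
  | 5%nat => mkTypeA 1 0 0 1 (-1) 0
  | _ => mkTypeA 0 0 0 0 0 0
  end.

(* Main.v *)
Require Import Defs.
From Stdlib Require Import Reals Lra Psatz Lia.
Open Scope R_scope.

Definition mulv (G : TypeA) (x y : R*R) : R*R :=
  (fst x*fst y*ca G + (fst x*snd y + snd x*fst y)*cc G + snd x*snd y*ce G,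
   fst x*fst y*cb G + (fst x*snd y + snd x*fst y)*cd G + snd x*snd y*cf G).
Definition lc (al : R) (x : R*R) (be : R) (y : R*R) : R*R :=
  (al*fst x + be*fst y, al*snd x + be*snd y).
Definition dv (x y : R*R) : R := fst x * snd y - snd x * fst y.

Definition Smat (f1 f2 : R*R) (a b : idx) : R :=
  match a, b with
  | i1, i1 => fst f1 | i2, i1 => snd f1 | i1, i2 => fst f2 | i2, i2 => snd f2 end.
Definition Tmat (f1 f2 : R*R) (a b : idx) : R :=
  let D := dv f1 f2 in
  match a, b with
  | i1, i1 => snd f2 / D | i1, i2 => - fst f2 / D
  | i2, i1 => - snd f1 / D | i2, i2 => fst f1 / D end.

Lemma sum2_zero (f : idx -> R) : (forall k, f k = 0) -> sum2 f = 0.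
Proof. intros H; unfold sum2; rewrite !H; ring. Qed.

Lemma basis_equiv (G N : TypeA) (f1 f2 : R*R) :
  dv f1 f2 <> 0 ->
  mulv G f1 f1 = lc (ca N) f1 (cb N) f2 ->
  mulv G f1 f2 = lc (cc N) f1 (cd N) f2 ->
  mulv G f2 f2 = lc (ce N) f1 (cf N) f2 ->
  lin_equiv G N.
Proof.
  intros HD H11 H12 H22.
  set (S := Smat f1 f2). set (T := Tmat f1 f2).
  assert (E : forall a b k,
    sum2 (fun c => sum2 (fun d => S c a * S d b * Gam G c d k))
    - sum2 (fun m => S k m * Gam N a b m) = 0).
  { destruct f1 as [p r], f2 as [q s].
    unfold mulv, lc in *; simpl in *.
    injection H11 as A1 A2. injection H12 as B1 B2. injection H22 as C1 C2.
    intros a b k; destruct a, b, k; unfold S, sum2; simpl; nra. }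
  exists T. split.
  - destruct f1 as [p r], f2 as [q s]. unfold dv in HD; simpl in HD.
    unfold T, det2, Tmat, dv; simpl.
    replace (s / (p * s - r * q) * (p / (p * s - r * q)) -
      - q / (p * s - r * q) * (- r / (p * s - r * q))) with (/ (p*s - r*q)) by (field; exact HD).
    apply Rinv_neq_0_compat; exact HD.
  - intros i j l. apply Rminus_diag_uniq.
    transitivity (sum2 (fun k => sum2 (fun a => sum2 (fun b =>
       T l k * T a i * T b j *
       (sum2 (fun c => sum2 (fun d => S c a * S d b * Gam G c d k))
        - sum2 (fun m => S k m * Gam N a b m)))))).
    + destruct f1 as [p r], f2 as [q s]. unfold dv in HD; simpl in HD.
      destruct i, j, l; unfold S, T, Smat, Tmat, sum2, dv; simpl; field; exact HD.
    + apply sum2_zero; intro k; apply sum2_zero; intro a; apply sum2_zero; intro b.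
      rewrite E; ring.
Qed.

Lemma lin_equiv_sym G1 G2 : lin_equiv G1 G2 -> lin_equiv G2 G1.
Proof.
  intros [T [Hd H]].
  apply (basis_equiv G2 G1 (T i1 i1, T i2 i1) (T i1 i2, T i2 i2)).
  - unfold dv, det2 in *; simpl; lra.
  - pose proof (H i1 i1 i1); pose proof (H i1 i1 i2).
    unfold mulv, lc, sum2 in *; simpl in *; f_equal; lra.
  - pose proof (H i1 i2 i1); pose proof (H i1 i2 i2).
    unfold mulv, lc, sum2 in *; simpl in *; f_equal; lra.
  - pose proof (H i2 i2 i1); pose proof (H i2 i2 i2).
    unfold mulv, lc, sum2 in *; simpl in *; f_equal; lra.
Qed.

Ltac unpack := let T := fresh "T" in let Hd := fresh "Hd" in let H := fresh "H" in
  intros [T [Hd H]];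
  pose proof (H i1 i1 i1); pose proof (H i1 i1 i2);
  pose proof (H i1 i2 i1); pose proof (H i1 i2 i2);
  pose proof (H i2 i2 i1); pose proof (H i2 i2 i2);
  clear H; unfold det2, sum2 in *; simpl in *;
  set (p := T i1 i1) in *; set (q := T i1 i2) in *;
  set (r := T i2 i1) in *; set (s := T i2 i2) in *;
  clearbody p q r s.

Ltac z v := assert (v = 0) by nra; subst v.
Ltac fin := match goal with H : _ <> 0 |- _ => apply H; ring end.
Lemma ne01 : ~ lin_equiv (Gamma0 0) (Gamma0 1). Proof. unpack. z p. z q. fin. Qed.
Lemma ne02 : ~ lin_equiv (Gamma0 0) (Gamma0 2). Proof. unpack. z p. z r. fin. Qed.
Lemma ne03 : ~ lin_equiv (Gamma0 0) (Gamma0 3). Proof. unpack. z r. z s. fin. Qed.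
Lemma ne04 : ~ lin_equiv (Gamma0 0) (Gamma0 4). Proof. unpack. z r. z s. fin. Qed.
Lemma ne05 : ~ lin_equiv (Gamma0 0) (Gamma0 5). Proof. unpack. z p. z r. fin. Qed.
Lemma ne12 : ~ lin_equiv (Gamma0 1) (Gamma0 2). Proof. unpack. z q. z s. fin. Qed.
Lemma ne13 : ~ lin_equiv (Gamma0 1) (Gamma0 3). Proof. unpack. z s. z q. fin. Qed.
Lemma ne14 : ~ lin_equiv (Gamma0 1) (Gamma0 4). Proof. unpack. z s. z q. fin. Qed.
Lemma ne15 : ~ lin_equiv (Gamma0 1) (Gamma0 5). Proof. unpack. z q. z s. fin. Qed.
Lemma ne23 : ~ lin_equiv (Gamma0 2) (Gamma0 3). Proof. unpack. z p. z q. fin. Qed.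
Lemma ne24 : ~ lin_equiv (Gamma0 2) (Gamma0 4). Proof. unpack. z r. z p. fin. Qed.
Lemma ne34 : ~ lin_equiv (Gamma0 3) (Gamma0 4). Proof. unpack. z r. z s. fin. Qed.
Lemma ne35 : ~ lin_equiv (Gamma0 3) (Gamma0 5). Proof. unpack. z p. z r. fin. Qed.
Lemma ne45 : ~ lin_equiv (Gamma0 4) (Gamma0 5). Proof. unpack. z p. z r. fin. Qed.
Lemma ne25 : ~ lin_equiv (Gamma0 2) (Gamma0 5).
Proof. unpack.
  assert (E : (p*p+r*r)*(q*q+s*s) = 0) by nra.
  apply Rmult_integral in E; destruct E as [E|E].
  - z p. z r. fin.
  - z q. z s. fin.
Qed.

Lemma mul_lc2 G a b c d x y : mulv G (lc a x b y) (lc c x d y) =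
  (a*c*fst (mulv G x x) + (a*d+b*c)*fst (mulv G x y) + b*d*fst (mulv G y y),
   a*c*snd (mulv G x x) + (a*d+b*c)*snd (mulv G x y) + b*d*snd (mulv G y y)).
Proof. destruct x, y; unfold mulv, lc; simpl; f_equal; ring. Qed.

Lemma dv_lc a b c d x y : dv (lc a x b y) (lc c x d y) = (a*d - b*c) * dv x y.
Proof. destruct x, y; unfold dv, lc; simpl; ring. Qed.

Ltac solve_basis :=
  rewrite mul_lc2; repeat match goal with H : mulv _ _ _ = _ |- _ => rewrite H end;
  unfold lc; simpl; f_equal.

Lemma gamma2_from G u n k : 0 < k -> dv u n <> 0 -> mulv G u u = u ->
  mulv G u n = n -> mulv G n n = lc k u 0 n -> lin_equiv G (Gamma0 2).
Proof.
  intros Hk Hd Huu Hun Hnn.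
  assert (Hr : sqrt k * sqrt k = k) by (apply sqrt_sqrt; lra).
  assert (Hr0 : 0 < sqrt k) by (apply sqrt_lt_R0; lra).
  set (r := sqrt k) in *. clearbody r. subst k.
  apply (basis_equiv G _ (lc (-1/2) u (1/(2*r)) n) (lc (1/2) u (1/(2*r)) n)).
  - rewrite dv_lc. apply Rmult_integral_contrapositive_currified; auto.
    intro E. apply (f_equal (fun z => z * (2*r))) in E.
    field_simplify in E; try lra; try assumption;
    try (unfold Rdiv in E; rewrite Rinv_r in E by assumption; lra); try (field_simplify in E; lra).
  - solve_basis; field; lra.
  - solve_basis; field; lra.
  - solve_basis; field; lra.
Qed.

Lemma gamma5_from G u n k : k < 0 -> dv u n <> 0 -> mulv G u u = u ->
  mulv G u n = n -> mulv G n n = lc k u 0 n -> lin_equiv G (Gamma0 5).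
Proof.
  intros Hk Hd Huu Hun Hnn.
  assert (Hr : sqrt (-k) * sqrt (-k) = -k) by (apply sqrt_sqrt; lra).
  assert (Hr0 : 0 < sqrt (-k)) by (apply sqrt_lt_R0; lra).
  set (r := sqrt (-k)) in *. clearbody r.
  replace k with (-(r*r)) in * by lra.
  apply (basis_equiv G _ (lc 1 u 0 n) (lc 0 u (1/r) n)).
  - rewrite dv_lc. apply Rmult_integral_contrapositive_currified; auto.
    intro E. apply (f_equal (fun z => z * r)) in E.
    field_simplify in E; try lra; try assumption;
    try (unfold Rdiv in E; rewrite Rinv_r in E by assumption; lra); try (field_simplify in E; lra).
  - solve_basis; field; lra.
  - solve_basis; field; lra.
  - solve_basis; field; lra.
Qed.

Lemma gamma1b G m n A B : A <> 0 -> dv m n <> 0 -> mulv G m m = lc A m B n ->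
  mulv G m n = lc 0 m A n -> mulv G n n = lc 0 m 0 n -> lin_equiv G (Gamma0 1).
Proof.
  intros HA Hd Hmm Hmn Hnn.
  apply (basis_equiv G _ (lc (1/A) m (-B/(A*A)) n) (lc 0 m 1 n)).
  - rewrite dv_lc. apply Rmult_integral_contrapositive_currified; auto.
    intro E. apply (f_equal (fun z => z * A)) in E.
    field_simplify in E; try lra; try assumption;
    try (unfold Rdiv in E; rewrite Rinv_r in E by assumption; lra); try (field_simplify in E; lra).
  - solve_basis; field; lra.
  - solve_basis; field; lra.
  - solve_basis; field; lra.
Qed.

Lemma gamma3_from G m n A B : A <> 0 -> dv m n <> 0 -> mulv G m m = lc A m B n ->
  mulv G m n = lc 0 m 0 n -> mulv G n n = lc 0 m 0 n -> lin_equiv G (Gamma0 3).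
Proof.
  intros HA Hd Hmm Hmn Hnn.
  apply (basis_equiv G _ (lc 0 m 1 n) (lc (1/A) m (B/(A*A)) n)).
  - rewrite dv_lc. apply Rmult_integral_contrapositive_currified; auto.
    intro E. apply (f_equal (fun z => z * A)) in E.
    field_simplify in E; try lra; try assumption;
    try (unfold Rdiv in E; rewrite Rinv_r in E by assumption; lra); try (field_simplify in E; lra).
    try (assert (- A / A = -1) by (field; assumption); lra).
  - solve_basis; field; lra.
  - solve_basis; field; lra.
  - solve_basis; field; lra.
Qed.

Definition sc (k : R) (x : R*R) : R*R := (k * fst x, k * snd x).
Definition tau (G : TypeA) (x : R*R) : R := fst x * (ca G + cd G) + snd x * (cc G + cf G).
Definition nv (G : TypeA) : R*R := (cc G + cf G, -(ca G + cd G)).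
Definition mv (G : TypeA) : R*R := (ca G + cd G, cc G + cf G).
Definition kap (G : TypeA) : R :=
  let n1 := cc G + cf G in let n2 := -(ca G + cd G) in
  -((n1*ca G + n2*cc G)*(n1*cd G + n2*cf G) - (n1*cc G + n2*ce G)*(n1*cb G + n2*cd G)).

Lemma mul_comm G x y : mulv G x y = mulv G y x.
Proof. unfold mulv; f_equal; ring. Qed.
Lemma mul_scl G k x y : mulv G (sc k x) y = sc k (mulv G x y).
Proof. unfold mulv, sc; simpl; f_equal; ring. Qed.
Lemma mul_scr G k x y : mulv G x (sc k y) = sc k (mulv G x y).
Proof. unfold mulv, sc; simpl; f_equal; ring. Qed.
Lemma tau_sc G k x : tau G (sc k x) = k * tau G x.
Proof. unfold tau, sc; simpl; ring. Qed.
Lemma mul_lcr G a b x y z : mulv G z (lc a x b y) = lc a (mulv G z x) b (mulv G z y).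
Proof. unfold mulv, lc; simpl; f_equal; ring. Qed.

Lemma assoc_vec G x y z : flat G ->
  mulv G x (mulv G y z) = mulv G y (mulv G x z).
Proof.
  intro Hf. destruct x as [x1 x2], y as [y1 y2], z as [z1 z2].
  unfold mulv; simpl. f_equal.
  - apply Rminus_diag_uniq.
    transitivity ((x1*y2 - x2*y1)*(z1*curv G i1 i2 i1 i1 + z2*curv G i1 i2 i2 i1)).
    + unfold curv, sum2; simpl; ring.
    + rewrite !Hf; ring.
  - apply Rminus_diag_uniq.
    transitivity ((x1*y2 - x2*y1)*(z1*curv G i1 i2 i1 i2 + z2*curv G i1 i2 i2 i2)).
    + unfold curv, sum2; simpl; ring.
    + rewrite !Hf; ring.
Qed.

Lemma Lnn G x : mulv G (nv G) (mulv G (nv G) x) = sc (kap G) x.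
Proof. unfold mulv, nv, sc, kap; simpl; f_equal; ring. Qed.

Lemma dv_n G v : dv v (nv G) = - tau G v.
Proof. unfold dv, nv, tau; simpl; ring. Qed.

Lemma tau_nn G : flat G -> tau G (mulv G (nv G) (nv G)) = 2 * kap G.
Proof.
  intro Hf.
  pose proof (assoc_vec G (1,0) (nv G) (nv G) Hf) as h1.
  pose proof (assoc_vec G (0,1) (nv G) (nv G) Hf) as h2.
  rewrite (mul_comm G (1,0) (nv G)), Lnn in h1.
  rewrite (mul_comm G (0,1) (nv G)), Lnn in h2.
  apply (f_equal fst) in h1. apply (f_equal snd) in h2.
  revert h1 h2. unfold mulv, tau, sc; simpl. intros h1 h2. nra.
Qed.

Lemma pair_eq (x y : R*R) : fst x = fst y -> snd x = snd y -> x = y.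
Proof. destruct x, y; simpl; intros; subst; auto. Qed.

Lemma case_kap_nz G : flat G -> kap G <> 0 ->
  lin_equiv G (Gamma0 2) \/ lin_equiv G (Gamma0 5).
Proof.
  intros Hf Hk.
  set (n := nv G) in *. set (k := kap G) in *.
  set (nn := mulv G n n).
  assert (H4 : mulv G nn nn = sc k nn).
  { unfold nn. rewrite (assoc_vec G _ n n Hf).
    rewrite (mul_comm G (mulv G n n) n). unfold n, k; rewrite Lnn.
    reflexivity. }
  assert (H3 : mulv G nn n = sc k n).
  { unfold nn. rewrite mul_comm. unfold n, k; apply Lnn. }
  set (u := sc (/k) nn).
  assert (Huu : mulv G u u = u).
  { unfold u; rewrite mul_scl, mul_scr, H4. unfold sc; simpl.
    apply pair_eq; simpl; field; auto. }
  assert (Hun : mulv G u n = n).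
  { unfold u; rewrite mul_scl, H3. unfold sc; simpl.
    apply pair_eq; simpl; field; auto. }
  assert (Hnn : mulv G n n = lc k u 0 n).
  { fold nn. unfold u, lc, sc; apply pair_eq; simpl; field; auto. }
  assert (Hd : dv u n <> 0).
  { change (dv u (nv G) <> 0); rewrite dv_n. unfold u; rewrite tau_sc. unfold nn, n.
    rewrite tau_nn by auto. fold k. intro E. field_simplify in E; auto; lra. }
  destruct (Rlt_or_le 0 k) as [Hp | Hn].
  - left; apply (gamma2_from G u n k); auto.
  - right; apply (gamma5_from G u n k); auto. lra.
Qed.

Lemma sumsq x y : 0 <= x*x + y*y. Proof. nra. Qed.

Definition N2 G := (ca G + cd G)*(ca G + cd G) + (cc G + cf G)*(cc G + cf G).

Lemma decomp G v : N2 G <> 0 ->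
  v = lc (tau G v / N2 G) (mv G) (dv v (mv G) / N2 G) (nv G).
Proof. intro H. destruct v. unfold lc, tau, mv, nv, dv, N2 in *; simpl in *.
  apply pair_eq; simpl; field; auto. Qed.

Lemma trace_id G x : N2 G <> 0 ->
  tau G x = tau G (mulv G x (mv G)) / N2 G + dv (mulv G x (nv G)) (mv G) / N2 G.
Proof. intro H. destruct x. unfold mulv, tau, mv, nv, dv, N2 in *; simpl in *.
  field; auto. Qed.

Lemma tau_m G : tau G (mv G) = N2 G.
Proof. unfold tau, mv, N2; simpl; ring. Qed.

Lemma dv_mn G : dv (mv G) (nv G) = - N2 G.
Proof. unfold dv, mv, nv, N2; simpl; ring. Qed.

Lemma case_kap0 G : flat G -> kap G = 0 -> N2 G <> 0 ->
  lin_equiv G (Gamma0 1) \/ lin_equiv G (Gamma0 3).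
Proof.
  intros Hf Hk HN.
  assert (HNp : 0 < N2 G).
  { destruct (Rle_or_lt (N2 G) 0) as [h|h]; auto. exfalso; apply HN.
    apply Rle_antisym; auto. clear HN h. unfold N2. apply sumsq. }
  set (n := nv G) in *. set (m := mv G) in *.
  set (nn := mulv G n n).
  assert (Hnn : nn = lc 0 m 0 n).
  { assert (Ht : tau G nn = 0) by (unfold nn, n; rewrite tau_nn; auto; rewrite Hk; ring).
    pose proof (decomp G nn HN) as Hdec. fold m n in Hdec. rewrite Ht in Hdec.
    set (be := dv nn m / N2 G) in *. clearbody be.
    pose proof (Lnn G n) as L. fold n in L. fold nn in L. rewrite Hk in L.
    rewrite Hdec in L. rewrite mul_lcr in L. fold nn in L. rewrite Hdec in L.
    replace (0 / N2 G) with 0 in * by (unfold Rdiv; ring).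
    assert (Hb : be = 0).
    { pose proof (f_equal fst L) as L1. pose proof (f_equal snd L) as L2.
      unfold lc, sc, n, nv in L1, L2; simpl in L1, L2.
      unfold N2 in HNp.
      set (X := ca G + cd G) in *. set (Y := cc G + cf G) in *. clearbody X Y.
      ring_simplify in L1. ring_simplify in L2.
      clear -L1 L2 HNp.
      assert (E : be*be*(X*X+Y*Y) = 0).
      { transitivity ((Y*be^2)*Y - (-X*be^2)*X); [ring|]. rewrite L1, L2; ring. }
      apply Rmult_integral in E. destruct E as [E|E]; [nra|lra]. }
    rewrite Hdec, Hb. apply pair_eq; unfold lc; simpl; field; auto. }
  assert (Hdmn : dv m n <> 0) by (unfold m, n; rewrite dv_mn; lra).
  set (v := mulv G m n).
  pose proof (decomp G v HN) as Hdv. fold m n in Hdv.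
  set (al := tau G v / N2 G) in *. set (la := dv v m / N2 G) in *.
  assert (Hal : al = 0).
  { pose proof (assoc_vec G n m n Hf) as A1. fold v nn in A1.
    rewrite Hnn, mul_lcr in A1. rewrite Hdv in A1 at 1. rewrite mul_lcr in A1.
    rewrite (mul_comm G n m) in A1. fold v nn in A1. rewrite Hnn in A1.
    pose proof (f_equal fst A1) as A2. pose proof (f_equal snd A1) as A3.
    unfold lc in A2, A3; cbn [fst snd] in A2, A3.
    assert (E : al * tau G v = 0).
    { unfold tau. transitivity ((al*fst v)*(ca G + cd G) + (al * snd v)*(cc G + cf G)); [ring|].
      replace (al * fst v) with 0 by lra. replace (al * snd v) with 0 by lra. ring. }
    assert (E2 : al * al * N2 G = 0).
    { rewrite <- E. unfold al. field. auto. }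
    apply Rmult_integral in E2; destruct E2 as [E2|E2]; [|lra].
    apply Rmult_integral in E2; destruct E2; auto. }
  rewrite Hal in Hdv.
  set (mm := mulv G m m).
  pose proof (decomp G mm HN) as Hdm. fold m n in Hdm.
  set (A := tau G mm / N2 G) in *. set (B := dv mm m / N2 G) in *.
  assert (Hla : la * (la - A) = 0).
  { pose proof (assoc_vec G m n m Hf) as A1.
    rewrite (mul_comm G n m) in A1. fold v mm in A1.
    rewrite Hdv in A1 at 1. rewrite Hdm in A1. rewrite !mul_lcr in A1.
    rewrite (mul_comm G n m) in A1. fold v mm nn in A1. rewrite Hnn, Hdv in A1.
    pose proof (f_equal fst A1) as A2. pose proof (f_equal snd A1) as A3.
    unfold lc in A2, A3; cbn [fst snd] in A2, A3.
    unfold n, nv in A2, A3; cbn [fst snd] in A2, A3.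
    set (X := ca G + cd G) in *. set (Y := cc G + cf G) in *.
    set (mm1 := fst mm) in *. set (mm2 := snd mm) in *.
    unfold N2 in HNp. fold X Y in HNp.
    clearbody X Y mm1 mm2 A la.
    ring_simplify in A2. ring_simplify in A3.
    clear -A2 A3 HNp.
    assert (E : la * (la - A) * (X*X+Y*Y) = 0).
    { transitivity ((la^2 * Y - A*la*Y)*Y - (-la^2*X + A*la*X) * X); [ring|].
      replace (la^2 * Y - A*la*Y) with 0 by lra.
      replace (-la^2*X + A*la*X) with 0 by lra. ring. }
    apply Rmult_integral in E; destruct E; [auto|lra]. }
  assert (Htr : A + la = N2 G).
  { pose proof (trace_id G m HN) as T. fold m n mm v in T. rewrite tau_m in T.
    unfold A, la. symmetry; exact T. }
  apply Rmult_integral in Hla. destruct Hla as [H0 | H0].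
  - right. apply (gamma3_from G m n A B); auto.
    + lra.
    + rewrite H0 in Hdv. exact Hdv.
  - left. assert (Hl : la = A) by lra.
    apply (gamma1b G m n A B); auto.
    + lra.
    + change (v = lc 0 m A n). rewrite Hdv, Hl. reflexivity.
Qed.

Lemma case_tau0 G : flat G -> ca G + cd G = 0 -> cc G + cf G = 0 ->
  exists i, (i <= 5)%nat /\ lin_equiv G (Gamma0 i).
Proof.
  intros Hf H1 H2.
  pose proof (Hf i1 i2 i1 i1) as F1. pose proof (Hf i1 i2 i1 i2) as F2.
  pose proof (Hf i1 i2 i2 i1) as F3. pose proof (Hf i1 i2 i2 i2) as F4.
  clear Hf.
  destruct G as [a b c d e f]; unfold curv, sum2 in *; simpl in *.
  assert (d = -a) by lra. assert (f = -c) by lra. subst d f.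
  assert (E1 : a*a + b*c = 0) by lra.
  assert (E2 : a*e = c*c) by lra.
  assert (E3 : b*e = -(a*c)) by lra.
  destruct (Req_dec b 0) as [Hb | Hb].
  - subst b. assert (a = 0) by nra. subst a. assert (c = 0) by nra. subst c.
    destruct (Req_dec e 0) as [He | He].
    + subst e. exists 0%nat. split; [lia|].
      apply (basis_equiv _ _ (1,0) (0,1)); unfold dv, mulv, lc; simpl;
        try (apply pair_eq; simpl; ring); lra.
    + exists 4%nat. split; [lia|].
      apply (basis_equiv _ _ (e,0) (0,1)); unfold dv, mulv, lc; simpl;
        try (apply pair_eq; simpl; ring). intro; apply He; lra.
  - exists 4%nat. split; [lia|].
    assert (Hc : c = -(a*a)/b) by (replace (-(a*a)) with (b*c) by lra; field; auto).
    assert (He : e = a*a*a/(b*b)).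
    { apply (Rmult_eq_reg_l b); auto. rewrite E3, Hc. field. auto. }
    subst c e.
    apply (basis_equiv _ _ (a,b) (1,0)); unfold dv, mulv, lc; simpl;
      try (apply pair_eq; simpl; field; auto). intro; apply Hb; lra.
Qed.

Lemma ne_lt i j : (i < j)%nat -> (j <= 5)%nat -> ~ lin_equiv (Gamma0 i) (Gamma0 j).
Proof.
  intros H1 H2.
  destruct i as [|[|[|[|[|[|i]]]]]]; destruct j as [|[|[|[|[|[|j]]]]]]; try lia;
  first [ exact ne01 | exact ne02 | exact ne03 | exact ne04 | exact ne05
        | exact ne12 | exact ne13 | exact ne14 | exact ne15 | exact ne23
        | exact ne24 | exact ne25 | exact ne34 | exact ne35 | exact ne45 ].
Qed.

Theorem theorem3p2 :
  (forall G : TypeA, flat G ->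
     exists i : nat, (i <= 5)%nat /\ lin_equiv G (Gamma0 i)) /\
  (forall i j : nat, (i <= 5)%nat -> (j <= 5)%nat -> i <> j ->
     ~ lin_equiv (Gamma0 i) (Gamma0 j)).
Proof.
  split.
  - intros G Hf. destruct (Req_dec (kap G) 0) as [Hk|Hk].
    + destruct (Req_dec (N2 G) 0) as [HN|HN].
      * apply case_tau0; auto; unfold N2 in HN;
        set (X := ca G + cd G) in *; set (Y := cc G + cf G) in *; clearbody X Y;
        nra.
      * destruct (case_kap0 G Hf Hk HN) as [H|H]; [exists 1%nat | exists 3%nat]; split; auto; lia.
    + destruct (case_kap_nz G Hf Hk) as [H|H]; [exists 2%nat | exists 5%nat]; split; auto; lia.
  - intros i j Hi Hj Hij.
    destruct (Nat.lt_ge_cases i j) as [Hl|Hl].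
    + apply ne_lt; auto.
    + intro H. apply lin_equiv_sym in H. revert H. apply ne_lt; auto. lia.
Qed.
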